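(* Let $G$ be a graph, $k$ an integer, and $v$ a vertex of $G$. Suppose $(C_1,C_2)$ is a partition of $N_G(v)$ with $|C_1|\ge|C_2|$ such that (i) $C_1$ and $C_2$ are cliques in $G$, and (ii) letting $M$ be the set of pairs $\{c_1,c_2\}$ with $c_1\in C_1$, $c_2\in C_2$ and $\{c_1,c_2\}\notin E(G)$, every $c_1\in C_1$ is contained in precisely one element of $M$. Let $G'$ be obtained from $G$ by deleting $v$ and all vertices of $C_2$, and then, for every $\{c_1,c_2\}\in M$ with $c_1\in C_1$, $c_2\in C_2$, adding all edges between $c_1$ and the vertices of $N_G(c_2)$ that remain in $G'$. Then $G$ has a vertex cover of size $k$ if and only if $G'$ has a vertex cover of size $k-|C_2|$.
   Context: All graphs are finite, simple, undirected. $N_G(x)$ is the open neighborhood of $x$ in $G$. A clique is a set of pairwise adjacent vertices. A vertex cover is a set of vertices containing at least one endpoint of every edge; ''has a vertex cover of size $k$'' means has a vertex cover of size at most $k$. *)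

(* Defs.v *)
(* A finite simple graph on vertex type T is a symmetric,
   irreflexive boolean relation e : rel T. *)
From mathcomp Require Import all_boot all_order all_algebra.
Set Implicit Arguments. Unset Strict Implicit. Unset Printing Implicit Defensive.

Definition nbhd (T : finType) (e : rel T) (x : T) : {set T} := [set y | e x y].

Definition is_clique (T : finType) (e : rel T) (C : {set T}) : Prop :=
  forall x y, x \in C -> y \in C -> x != y -> e x y.

Definition is_vertex_cover (T : finType) (e : rel T) (S : {set T}) : Prop :=
  forall x y, e x y -> (x \in S) || (y \in S).

(* "has a vertex cover of size k" = of size at most k; k is an integer *)
Definition has_vc (T : finType) (e : rel T) (k : int) : Prop :=
  exists S : {set T}, (#|S|%:Z <= k)%R /\ is_vertex_cover e S.

Definition Vred (T : finType) (v : T) (C2 : {set T}) : pred T :=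
  fun x => x \notin v |: C2.

Definition red_vertex (T : finType) (v : T) (C2 : {set T}) : finType :=
  {x : T | Vred v C2 x}.

(* x = c1 gets joined to y \in N_G(c2), for a non-edge pair {c1,c2} in M *)
Definition new_edge (T : finType) (e : rel T) (C1 C2 : {set T}) (x y : T) : bool :=
  [exists c2 in C2, [&& x \in C1, ~~ e x c2 & e c2 y]].

Definition red_edge (T : finType) (e : rel T) (v : T) (C1 C2 : {set T})
  : rel (red_vertex v C2) :=
  fun x y => e (val x) (val y) ||
    [&& val x != val y &
        new_edge e C1 C2 (val x) (val y) || new_edge e C1 C2 (val y) (val x)].

(* Main.v *)
Require Import Defs.
From mathcomp Require Import all_boot all_order all_algebra.
From mathcomp Require Import zify.
Set Implicit Arguments. Unset Strict Implicit. Unset Printing Implicit Defensive.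

Lemma card_lower (T : finType) (v : T) (C2 A : {set T}) :
  {subset A <= Vred v C2} ->
  #|[set x : red_vertex v C2 | val x \in A]| = #|A|.
Proof.
move=> hA; rewrite -(card_imset _ val_inj); apply: eq_card => y.
apply/imsetP/idP => [[x]|Ay].
  by rewrite inE => Ax ->.
by exists (Sub y (hA y Ay) : red_vertex v C2); rewrite ?inE SubK.
Qed.

Lemma fwd_cover (T : finType) (e : rel T) v (C1 C2 A : {set T}) :
  (forall x y, Vred v C2 x -> Vred v C2 y -> e x y -> (x \in A) || (y \in A)) ->
  (forall x y, new_edge e C1 C2 x y -> Vred v C2 y -> (x \in A) || (y \in A)) ->
  is_vertex_cover (@red_edge T e v C1 C2) [set x | val x \in A].
Proof.
move=> hold hnew x y; rewrite /red_edge !inE => /orP[|/andP[_ /orP[]]].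
- by apply: hold; apply: valP.
- by move=> /hnew; apply; apply: valP.
- by move=> /hnew /(_ (valP x)); rewrite orbC.
Qed.

Lemma bwd_lift (T : finType) (e : rel T) v (C1 C2 : {set T})
  (S' : {set red_vertex v C2}) :
  is_vertex_cover (@red_edge T e v C1 C2) S' ->
  forall x y, Vred v C2 x -> Vred v C2 y ->
  e x y || ((x != y) && new_edge e C1 C2 x y) ->
  (x \in val @: S') || (y \in val @: S').
Proof.
move=> hS x y hx hy hxy.
have H : @red_edge T e v C1 C2 (Sub x hx) (Sub y hy).
  rewrite /red_edge !SubK; case/orP: hxy => [->//|/andP[-> ->]].
  by rewrite orbT.
case/orP: (hS _ _ H) => h; apply/orP; [left|right]; apply/imsetP;
  (eexists; first exact: h); by rewrite SubK.
Qed.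

Theorem proposition5 (T : finType) (e : rel T)
  (e_sym : symmetric e) (e_irr : irreflexive e)
  (k : int) (v : T) (C1 C2 : {set T})
  (hpart : C1 :|: C2 = nbhd e v) (hdisj : C1 :&: C2 = set0)
  (hcard : #|C2| <= #|C1|)
  (hC1 : is_clique e C1) (hC2 : is_clique e C2)
  (hM : forall c1, c1 \in C1 -> #|[set c2 in C2 | ~~ e c1 c2]| = 1) :
  has_vc e k <-> has_vc (@red_edge T e v C1 C2) (k - #|C2|%:Z)%R.
Proof.
have hN : forall x, e v x = (x \in C1) || (x \in C2).
  by move=> x; rewrite -in_setU hpart inE.
have hv1 : v \notin C1.
  by apply/negP => h; move: (e_irr v); rewrite hN h.
have hv2 : v \notin C2.
  by apply/negP => h; move: (e_irr v); rewrite hN h orbT.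
have disj : forall x, x \in C1 -> x \notin C2.
  move=> x h1; apply/negP => h2.
  by move: (in_set0 x); rewrite -hdisj inE h1 h2.
have VredE : forall x, Vred v C2 x = (x != v) && (x \notin C2).
  by move=> x; rewrite /Vred in_setU1 negb_or.
have C1V : forall x, x \in C1 -> Vred v C2 x.
  move=> x hx; rewrite VredE disj // andbT; apply/eqP => ev.
  by move: hv1; rewrite -ev hx.
split.
- case=> S [hSk hS].
  have c1miss : forall a a', a \in C1 -> a' \in C1 -> a \notin S -> a' \notin S -> a = a'.
    move=> a a' ha ha' nS nS'; apply/eqP; apply/negPn/negP => neq.
    by move: (hS a a' (hC1 a a' ha ha' neq)); rewrite (negbTE nS) (negbTE nS').
  have c2miss : forall a a', a \in C2 -> a' \in C2 -> a \notin S -> a' \notin S -> a = a'.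
    move=> a a' ha ha' nS nS'; apply/eqP; apply/negPn/negP => neq.
    by move: (hS a a' (hC2 a a' ha ha' neq)); rewrite (negbTE nS) (negbTE nS').
  have vS : forall x, e v x -> x \notin S -> v \in S.
    by move=> x hx nx; move: (hS v x hx); rewrite (negbTE nx) orbF.
  suff [A [hAV hsz hold hnew]] : exists A : {set T},
      [/\ {subset A <= Vred v C2}, #|A| + #|C2| <= #|S|,
       (forall x, x \in S -> Vred v C2 x -> x \in A) &
       (forall x y, new_edge e C1 C2 x y -> Vred v C2 y -> (x \in A) || (y \in A))].
    exists [set x : red_vertex v C2 | val x \in A]; split.
      rewrite card_lower //; lia.
    apply: fwd_cover => // x y hx hy /hS /orP[h|h]; apply/orP; [left|right]; auto.
  set B := v |: C2.
  have cB : #|B| = #|C2|.+1 by rewrite /B cardsU1 hv2.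
  have inB : forall x, Vred v C2 x = (x \notin B) by [].
  have SDV : forall x, x \in S :\: B -> Vred v C2 x.
    by move=> x; rewrite inE => /andP[].
  have SDin : forall x, x \in S -> Vred v C2 x -> x \in S :\: B.
    by move=> x xS xV; rewrite inE xS andbT.
  case: (boolP (C2 \subset S)) => hC2S.
  + case: (pickP [pred a | (a \in C1) && (a \notin S)]) => [a /andP[aC1 aS] | hnone].
    * have vSS : v \in S by apply: (vS a); rewrite // hN aC1.
      have BS : B \subset S by rewrite /B subUset sub1set vSS hC2S.
      exists ((S :\: B) :|: [set a]); split.
      -- move=> x; rewrite !inE => /orP[/andP[xB _]|/eqP ->]; last exact: C1V.
         by rewrite unfold_in /Vred in_setU1.
      -- have := cardsU (S :\: B) [set a]; rewrite cards1 cardsDS //.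
         have := subset_leq_card BS; lia.
      -- by move=> x xS xV; rewrite inE SDin.
      -- move=> x y /existsP[c2 /and4P[_ xC1 _ _]] _.
         apply/orP; left; rewrite inE; case: (boolP (x \in S)) => xS.
           by rewrite SDin //; apply: C1V.
         by rewrite (c1miss x a) ?set11 ?orbT.
    * have C1S : forall x, x \in C1 -> x \in S.
        by move=> x xC1; move: (hnone x) => /=; rewrite xC1 /= => /negbFE.
      exists (S :\: B); split => //.
      -- rewrite cardsD.
         have : C2 \subset S :&: B.
           by rewrite subsetI hC2S /B subsetUr.
         move=> /subset_leq_card; have := subset_leq_card (subsetIl S B); lia.
      -- move=> x y /existsP[c2 /and4P[_ xC1 _ _]] _.
         by rewrite SDin ?C1S //; apply: C1V.
  + case/subsetPn: hC2S => b bC2 bS.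
    have vSS : v \in S by apply: (vS b); rewrite // hN bC2 orbT.
    exists (S :\: B); split => //.
    * rewrite cardsD.
      have : v |: (C2 :\ b) \subset S :&: B.
        apply/subsetP => z; rewrite !inE => /orP[/eqP ->|/andP[zb zC2]].
          by rewrite vSS eqxx.
        rewrite zC2 !orbT andbT; apply/negPn/negP => zS.
        by move: zb; rewrite (c2miss z b) // eqxx.
      move=> /subset_leq_card; rewrite cardsU1 !inE ?eqxx /= ?hv2 /=.
      have := cardsD1 b C2; rewrite bC2.
      have := subset_leq_card (subsetIl S B); lia.
    * move=> x y /existsP[c2 /and4P[c2C2 xC1 nxc2 c2y]] yV.
      case: (boolP (x \in S)) => xS; first by rewrite SDin //; apply: C1V.
      have nxb : ~~ e x b.
        by apply/negP => /hS; rewrite (negbTE xS) (negbTE bS).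
      have := hM x xC1; move/eqP/cards1P => [c hc].
      have : b \in [set c2 in C2 | ~~ e x c2] by rewrite inE bC2 nxb.
      have : c2 \in [set c2 in C2 | ~~ e x c2] by rewrite inE c2C2 nxc2.
      rewrite hc !in_set1 => /eqP c2c /eqP bc; subst c2 b.
      move: (hS c y c2y); rewrite (negbTE bS) /= => yS.
      by rewrite (SDin y) ?orbT.
- case=> S' [hS'k hS'].
  set A0 := val @: S'.
  have cA0 : #|A0| = #|S'| by rewrite card_imset //; apply: val_inj.
  have A0V : forall x, x \in A0 -> Vred v C2 x.
    by move=> x /imsetP[y _ ->]; apply: valP.
  have hQ := bwd_lift hS'.
  suff [S [hsz hS]] : exists S : {set T}, #|S| <= #|A0| + #|C2| /\ is_vertex_cover e S.
    exists S; split => //; lia.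
  case: (boolP (C1 \subset A0)) => hC1A.
  + exists (A0 :|: C2); split.
      by have := cardsU A0 C2; lia.
    move=> x y exy; rewrite !inE.
    case: (boolP (x \in C2)) => xC2; first by rewrite orbT.
    case: (boolP (y \in C2)) => yC2; first by rewrite !orbT.
    case: (eqVneq x v) => [xv|xv].
      subst x; move: exy; rewrite hN (negbTE yC2) orbF => /(subsetP hC1A) ->.
      by rewrite orbT.
    case: (eqVneq y v) => [yv|yv].
      subst y; move: exy; rewrite e_sym hN (negbTE xC2) orbF => /(subsetP hC1A) ->.
      by [].
    have := hQ x y; rewrite !VredE xv yv xC2 yC2 exy => /(_ isT isT isT).
    by case/orP => ->; rewrite ?orbT.
  + case/subsetPn: hC1A => a aC1 aA0.
    have := hM a aC1; move/eqP/cards1P => [b hb].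
    have : b \in [set c2 in C2 | ~~ e a c2] by rewrite hb set11.
    rewrite inE => /andP[bC2 nab].
    exists (A0 :|: (v |: (C2 :\ b))); split.
      have := cardsU A0 (v |: (C2 :\ b)); rewrite cardsU1.
      have := cardsD1 b C2; rewrite bC2; case: (v \notin C2 :\ b); lia.
    have P : forall y, e b y -> y \in A0 :|: (v |: (C2 :\ b)).
      move=> y eby; rewrite in_setU in_setU1 in_setD1.
      case: (eqVneq y v) => [->|yv]; first by rewrite !orbT.
      case: (boolP (y \in C2)) => yC2.
        have : y != b by apply/eqP => yb; move: eby; rewrite yb e_irr.
        by move=> ->; rewrite !orbT.
      have := hQ a y (C1V a aC1); rewrite VredE yv yC2 => /(_ isT).
      rewrite (negbTE aA0) /= => -> //; apply/orP; right; apply/andP; split.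
        by apply/eqP => ay; move: nab; rewrite ay e_sym eby.
      by apply/existsP; exists b; rewrite bC2 aC1 nab eby.
    move=> x y exy.
    case: (boolP (x \in A0 :|: (v |: (C2 :\ b)))) => // xS.
    case: (boolP (y \in A0 :|: (v |: (C2 :\ b)))) => // yS.
    have Hx : forall z, z \notin A0 :|: (v |: (C2 :\ b)) -> (z = b) \/ (Vred v C2 z /\ z \notin A0).
      move=> z; rewrite in_setU in_setU1 in_setD1 !negb_or => /and3P[zA zv zr].
      case: (eqVneq z b) => [->|zb]; [by left | right].
      move: zr; rewrite zb /= => zC2; split => //.
      by rewrite VredE zv zC2.
    case: (Hx x xS) => [xb|[xV xA]].
      by subst x; move: yS; rewrite P.
    case: (Hx y yS) => [yb|[yV yA]].
      by subst y; move: xS; rewrite P // e_sym.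
    by move: (hQ x y xV yV); rewrite exy (negbTE xA) (negbTE yA) => /(_ isT).
Qed.
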